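(* For any $\gamma>0$ and any continuous function $f:[0,1]\to\mathbb R$, there exists a nondecreasing function $g^*:[0,1]\to\mathbb R$ such that $$\lambda(\{x\in[0,1]:|f(x)-g^*(x)|>\gamma\})=\inf_{g\in\mathcal M}\lambda(\{x\in[0,1]:|f(x)-g(x)|>\gamma\}).$$
   Context: $\mathcal M$ is the set of monotone nondecreasing functions $g:[0,1]\to\mathbb R$, and $\lambda$ is Lebesgue measure. *)

(* Defs.v *)
From HB Require Import structures.
From mathcomp Require Import all_boot all_order all_algebra.
From mathcomp Require Import all_classical all_reals all_analysis.
Set Implicit Arguments. Unset Strict Implicit. Unset Printing Implicit Defensive.
Import Order.TTheory GRing.Theory Num.Theory.
Local Open Scope classical_set_scope.
Local Open Scope ring_scope.

Definition monotone01 (R : realType) (g : R -> R) : Prop :=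
  {in `[0, 1] &, {homo g : x y / x <= y}}.

Definition bad_set (R : realType) (gamma : R) (f g : R -> R) : set R :=
  [set x | x \in `[0, 1] /\ gamma < `|f x - g x|].

(* Main.v *)
Require Import Defs.
From HB Require Import structures.
From mathcomp Require Import all_boot all_order all_algebra.
From mathcomp Require Import all_classical all_reals all_analysis.
From mathcomp Require Import ring lra measurable_realfun.
Import Order.TTheory GRing.Theory Num.Theory numFieldNormedType.Exports.
Local Open Scope classical_set_scope.
Local Open Scope ring_scope.
Set Warnings "-all".

Section Gen.
Context {R : realType}.
Local Notation mu := (@lebesgue_measure R).

Lemma muUI (A B : set R) : measurable A -> measurable B ->
  (mu (A `|` B) + mu (A `&` B) = mu A + mu B)%E.
Proof.
move=> mA mB.
have -> : A `|` B = A `|` (B `\` A) by rewrite setUDr setDv setD0.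
rewrite measureU//; last 2 first.
- exact: measurableD.
- exact: setDIK.
rewrite (measureDI lebesgue_measure mB mA) setIC addeA. reflexivity.
Qed.

Lemma mu01 : mu `[(0:R), 1]%classic = 1%E.
Proof. by rewrite lebesgue_measure_itv/= lte01 oppr0 adde0. Qed.

Lemma bad_le1 (gamma : R) f g : (mu (bad_set gamma f g) <= 1)%E.
Proof. by rewrite -mu01; apply: le_outer_measure => x []. Qed.

Lemma bad_fin (gamma : R) f g : mu (bad_set gamma f g) \is a fin_num.
Proof.
rewrite ge0_fin_numE ?measure_ge0//.
by apply: (le_lt_trans (bad_le1 gamma f g)); rewrite ltry.
Qed.

Lemma bad_memP (gamma : R) f g x : bad_set gamma f g x <->
  x \in `[(0:R), 1] /\ (f x + gamma < g x \/ g x < f x - gamma).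
Proof.
rewrite /bad_set /=; split => -[H1 H2]; split => //.
  move: H2; rewrite ltr_normr => /orP[] H; [right|left]; lra.
rewrite ltr_normr; apply/orP; case: H2 => H; [right|left]; lra.
Qed.

Definition clampv (a b y : R) := Num.max a (Num.min y b).

Lemma clampv_mono a b : nondecreasing_fun (clampv a b).
Proof. by move=> x y xy; apply: le_max2 => //; apply: le_min2. Qed.

Lemma clampv_ge a b y : a <= clampv a b y.
Proof. by rewrite /clampv le_max lexx. Qed.

Lemma clampv_le a b y : a <= b -> clampv a b y <= b.
Proof. by move=> ab; rewrite /clampv ge_max ab ge_min lexx orbT. Qed.

Lemma clampv_up a b y c : a <= c -> c < clampv a b y -> c < y.
Proof.
move=> ac; rewrite /clampv lt_max => /orP[H|]; first by move: (le_lt_trans ac H); rewrite ltxx.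
by rewrite lt_min => /andP[].
Qed.

Lemma clampv_dn a b y c : c <= b -> clampv a b y < c -> y < c.
Proof.
move=> cb; rewrite /clampv gt_max => /andP[_]; rewrite gt_min => /orP[//|H].
by move: (lt_le_trans H cb); rewrite ltxx.
Qed.

Definition cl01 (x : R) := clampv 0 1 x.

Lemma cl01_id x : x \in `[(0:R), 1] -> cl01 x = x.
Proof.
rewrite in_itv/= => /andP[x0 x1]; rewrite /cl01 /clampv min_l // max_r //.
Qed.

Lemma cl01_in x : cl01 x \in `[(0:R), 1].
Proof. by rewrite in_itv/= clampv_ge clampv_le. Qed.

End Gen.
Section Main.
Variables (R : realType) (gamma : R) (f : R -> R).
Hypothesis fc : {within `[0, 1], continuous f}.
Variables (lo hi : R).
Hypothesis flohi : forall x, x \in `[(0:R), 1] -> lo <= f x - gamma /\ f x + gamma <= hi.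
Hypothesis lohi : lo <= hi.
Hypothesis gpos : 0 < gamma.
Local Notation mu := (@lebesgue_measure R).
Local Notation B := (bad_set gamma f).
Variable mi : R.
Hypothesis hmi : ereal_inf [set mu (B h) | h in @monotone01 R] = mi%:E.

Definition P (g : R -> R) := nondecreasing_fun g /\ forall x, lo <= g x <= hi.

Lemma P_mono {g} : P g -> monotone01 g.
Proof. by move=> [nd _] x y _ _; exact: nd. Qed.

Lemma P_meas {g} : P g -> measurable (B g).
Proof.
move=> [nd _].
have m01 : measurable (`[(0:R), 1]%classic) by exact: measurable_itv.
have mf : measurable_fun `[(0:R), 1] f.
  exact: subspace_continuous_measurable_fun.
have mg : measurable_fun `[(0:R), 1] g by exact: nondecreasing_measurable.
have mh : measurable_fun `[(0:R), 1] (fun x => `|f x - g x|).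
  by apply: measurableT_comp => //; exact: measurable_funB.
have := mh m01 `]gamma, +oo[%classic (measurable_itv _).
congr measurable; apply/seteqP; split => x /=; rewrite /bad_set/= in_itv/= => -[-> H]; split => //; by move: H; rewrite in_itv/= ?andbT.
Qed.

Definition mr g := fine (mu (B g)).

Lemma mu_mr g : mu (B g) = (mr g)%:E.
Proof. by rewrite /mr fineK// bad_fin. Qed.

Lemma mi_le {g} : monotone01 g -> mi <= mr g.
Proof.
move=> mg; rewrite -lee_fin -hmi -mu_mr; apply: ereal_inf_lbound; by exists g.
Qed.

Lemma P_max {g1 g2} : P g1 -> P g2 -> P (fun x => Num.max (g1 x) (g2 x)).
Proof.
move=> [n1 b1] [n2 b2]; split.
  by move=> x y xy; apply: le_max2; [exact: n1|exact: n2].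
move=> x; have /andP[l1 h1] := b1 x; have /andP[l2 h2] := b2 x.
by rewrite le_max l1 ge_max h1 h2.
Qed.

Lemma P_min {g1 g2} : P g1 -> P g2 -> P (fun x => Num.min (g1 x) (g2 x)).
Proof.
move=> [n1 b1] [n2 b2]; split.
  by move=> x y xy; apply: le_min2; [exact: n1|exact: n2].
move=> x; have /andP[l1 h1] := b1 x; have /andP[l2 h2] := b2 x.
by rewrite le_min l1 l2 ge_min h1.
Qed.

Lemma lattice {g1 g2} : P g1 -> P g2 ->
  mr (fun x => Num.max (g1 x) (g2 x)) + mi <= mr g1 + mr g2.
Proof.
move=> P1 P2.
set U := B (fun x => Num.max (g1 x) (g2 x)).
set V := B (fun x => Num.min (g1 x) (g2 x)).
have key : forall x, (U x = B g1 x /\ V x = B g2 x) \/ (U x = B g2 x /\ V x = B g1 x).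
  move=> x; rewrite /U /V /bad_set /mkset; cbv beta.
  case: (leP (g1 x) (g2 x)) => H.
    by right.
  by left.
have eU : U `|` V = B g1 `|` B g2.
  apply/funext => x; rewrite /setU /mkset.
  by case: (key x) => -[-> ->]; apply/propext; tauto.
have eI : U `&` V = B g1 `&` B g2.
  apply/funext => x; rewrite /setI /mkset.
  by case: (key x) => -[-> ->]; apply/propext; tauto.
have := @muUI R _ _ (P_meas (P_max P1 P2)) (P_meas (P_min P1 P2)).
rewrite -/U -/V eU eI muUI; [|exact: P_meas|exact: P_meas].
rewrite !mu_mr -!EFinD => -[E].
have := mi_le (P_mono (P_min P1 P2)); rewrite -/V. 
rewrite /mr in E *. lra.
Qed.

Lemma fatou (G : nat -> R -> R) g c : (forall n, P (G n)) ->
  (forall n, mr (G n) <= c) ->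
  (forall x, B g x -> exists N, forall n, (N <= n)%N -> B (G n) x) ->
  mr g <= c.
Proof.
move=> PG bG ev.
pose D N := \bigcap_(n in [set n | (N <= n)%N]) B (G n).
have mD : forall N, measurable (D N).
  move=> N; apply: bigcap_measurable; first by exists N => /=.
  by move=> k _; exact: P_meas.
have nd : nondecreasing_seq D.
  move=> N M NM; apply/subsetPset => x Dx n /= Mn; apply: Dx => /=.
  exact: leq_trans NM Mn.
have cv := @nondecreasing_cvg_mu _ _ _ mu D mD (bigcupT_measurable _ mD) nd.
rewrite -lee_fin -mu_mr.
apply: (@le_trans _ _ (mu (\bigcup_n D n))).
  apply: le_outer_measure => x Bx.
  have [N HN] := ev x Bx.
  by exists N => //.
apply: (cvge_to_le cv); apply: nearW => N /=.
apply: (@le_trans _ _ (mu (B (G N)))).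
  by apply: le_outer_measure => x DX; apply: DX => /=.
by rewrite mu_mr lee_fin.
Qed.
Definition E (i : nat) : R := (i.+1%:R)^-1.

Lemma E_gt0 i : 0 < E i.
Proof. by rewrite /E invr_gt0 ltr0Sn. Qed.

Lemma E_anti i j : (i <= j)%N -> E j <= E i.
Proof.
move=> ij; rewrite /E lef_pV2 ?posrE ?ltr0Sn // ler_nat; exact: ij.
Qed.

Variable h : nat -> R -> R.
Hypothesis hmon : forall i, monotone01 (h i).
Hypothesis hb : forall i, (mu (B (h i)) < (mi + (E i - E i.+1))%:E)%E.

Definition hh i x := clampv lo hi (h i (cl01 x)).

Lemma hh_P i : P (hh i).
Proof.
split.
  move=> x y xy; apply: clampv_mono; apply: hmon; rewrite ?cl01_in //.
  exact: clampv_mono.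
by move=> x; rewrite clampv_ge clampv_le.
Qed.

Lemma hh_bound i : mr (hh i) <= mi + (E i - E i.+1).
Proof.
rewrite -lee_fin -mu_mr; apply: (le_trans _ (ltW (hb i))).
apply: le_outer_measure => x /bad_memP [x01 H]; apply/bad_memP; split => //.
have [l u] := flohi _ x01.
move: H; rewrite /hh cl01_id //; case => H; [left|right].
  apply: (clampv_up _ _ _ _ _ H); move: l gpos; generalize (f x) => y; lra.
apply: (clampv_dn _ _ _ _ _ H); move: u gpos; generalize (f x) => y; lra.
Qed.

Fixpoint kk (m0 n : nat) : R -> R :=
  match n with
  | 0 => hh m0
  | n'.+1 => fun x => Num.max (kk m0 n' x) (hh (m0 + n'.+1) x)
  end.

Lemma kk_P m0 n : P (kk m0 n).
Proof. elim: n => [|n IH] /=; [exact: hh_P | exact: P_max IH (hh_P _)]. Qed.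

Lemma kk_bound m0 n : mr (kk m0 n) <= mi + (E m0 - E (m0 + n).+1).
Proof.
elim: n => [|n IH] /=; first by rewrite addn0; exact: hh_bound.
have := lattice (kk_P m0 n) (hh_P (m0 + n.+1)).
have := hh_bound (m0 + n.+1).
rewrite addnS. lra.
Qed.

Lemma kk_ge m0 n j x : (j <= n)%N -> hh (m0 + j) x <= kk m0 n x.
Proof.
elim: n => [|n IH] /=.
  by rewrite leqn0 => /eqP ->; rewrite addn0.
rewrite leq_eqVlt => /orP[/eqP ->|jn]; rewrite le_max ?lexx ?orbT //.
by rewrite IH.
Qed.

Lemma kk_le m0 n x c : (forall j, (j <= n)%N -> hh (m0 + j) x <= c) ->
  kk m0 n x <= c.
Proof.
elim: n => [|n IH] /= H; first by rewrite -(addn0 m0); exact: H.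
rewrite ge_max IH ?H //= => j jn; apply: H; exact: leqW.
Qed.

Lemma kk_mono m0 n n' x : (n <= n')%N -> kk m0 n x <= kk m0 n' x.
Proof.
move=> nn'; apply: kk_le => j jn; apply: kk_ge; exact: leq_trans jn nn'.
Qed.

Lemma E_lt i : E i.+1 < E i.
Proof. by rewrite /E ltf_pV2 ?posrE ?ltr0Sn // ltr_nat. Qed.
Lemma kk_bnd m0 n x : lo <= kk m0 n x <= hi.
Proof. by have [_ b] := kk_P m0 n; exact: b. Qed.

Definition K m0 x := sup (range (fun n => kk m0 n x)).

Lemma K_hs m0 x : has_sup (range (fun n => kk m0 n x)).
Proof.
split; first by exists (kk m0 0 x), 0%N.
exists hi => _ [n _ <-]; by have /andP[] := kk_bnd m0 n x.
Qed.

Lemma kk_leK m0 n x : kk m0 n x <= K m0 x.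
Proof. by apply: sup_upper_bound (K_hs m0 x) _ _; exists n. Qed.

Lemma K_le m0 x c : (forall n, kk m0 n x <= c) -> K m0 x <= c.
Proof.
move=> H; apply: ge_sup; first by exists (kk m0 0 x), 0%N.
by move=> _ [n _ <-].
Qed.

Lemma K_gt {m0 x c} : c < K m0 x -> exists n, c < kk m0 n x.
Proof.
move=> cK; have [//|nH] := pselect (exists n, c < kk m0 n x).
have : K m0 x <= c.
  apply: K_le => n; rewrite leNgt; apply/negP => H; apply: nH; by exists n.
by rewrite leNgt cK.
Qed.

Lemma K_P m0 : P (K m0).
Proof.
split.
  move=> x y xy; apply: K_le => n; apply: le_trans (kk_leK m0 n y).
  by have [nd _] := kk_P m0 n; exact: nd.
move=> x; apply/andP; split.
  by apply: le_trans (kk_leK m0 0 x); have /andP[] := kk_bnd m0 0 x.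
by apply: K_le => n; have /andP[] := kk_bnd m0 n x.
Qed.

Lemma K_step m0 x : K m0.+1 x <= K m0 x.
Proof.
apply: K_le => n; apply: le_trans (kk_leK m0 n.+1 x).
apply: kk_le => j jn; rewrite addSnnS; exact: kk_ge.
Qed.

Lemma K_anti m0 m1 x : (m0 <= m1)%N -> K m1 x <= K m0 x.
Proof.
move=> /subnK <-; elim: (m1 - m0)%N => [|d IH]; first by rewrite add0n.
by rewrite addSn; exact: le_trans (K_step _ x) IH.
Qed.

Lemma K_bound m0 : mr (K m0) <= mi + E m0.
Proof.
apply: (@fatou (kk m0)) => [n|n|x].
- exact: kk_P.
- have := kk_bound m0 n; have := E_gt0 (m0 + n).+1; lra.
move=> /bad_memP [x01 [H|H]].
  have [n0 Hn0] := K_gt H; exists n0 => n n0n; apply/bad_memP; split => //.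
  left; exact: lt_le_trans Hn0 (kk_mono m0 n0 n x n0n).
exists 0%N => n _; apply/bad_memP; split => //.
right; exact: le_lt_trans (kk_leK m0 n x) H.
Qed.

Definition gs x := inf (range (fun m0 => K m0 x)).

Lemma gs_hi x : has_inf (range (fun m0 => K m0 x)).
Proof.
split; first by exists (K 0 x), 0%N.
exists lo => _ [n _ <-]; have [_ b] := K_P n; by have /andP[] := b x.
Qed.

Lemma gs_le m0 x : gs x <= K m0 x.
Proof. by apply: ge_inf; [case: (gs_hi x)|exists m0]. Qed.

Lemma gs_ge x c : (forall m0, c <= K m0 x) -> c <= gs x.
Proof.
move=> H; apply: lb_le_inf; first by exists (K 0 x), 0%N.
by move=> _ [n _ <-].
Qed.

Lemma gs_lt {x c} : gs x < c -> exists m0, K m0 x < c.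
Proof.
move=> cK; have [//|nH] := pselect (exists m0, K m0 x < c).
have : c <= gs x.
  apply: gs_ge => n; rewrite leNgt; apply/negP => H; apply: nH; by exists n.
by rewrite leNgt cK.
Qed.

Lemma gs_P : P gs.
Proof.
split.
  move=> x y xy; apply: gs_ge => m0; apply: le_trans (gs_le m0 x) _.
  by have [nd _] := K_P m0; exact: nd.
move=> x; apply/andP; split.
  by apply: gs_ge => m0; have [_ b] := K_P m0; have /andP[] := b x.
by apply: le_trans (gs_le 0 x) _; have [_ b] := K_P 0; have /andP[] := b x.
Qed.

Lemma gs_bound m0 : mr gs <= mi + E m0.
Proof.
apply: (@fatou (fun j => K (m0 + j))) => [n|n|x].
- exact: K_P.
- have := K_bound (m0 + n); have := @E_anti _ _ (leq_addr n m0); lra.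
move=> /bad_memP [x01 [H|H]].
  exists 0%N => n _; apply/bad_memP; split => //.
  left; exact: lt_le_trans H (gs_le _ x).
have [m1 Hm1] := gs_lt H; exists m1 => n m1n; apply/bad_memP; split => //.
right; apply: le_lt_trans Hm1; apply: K_anti.
exact: leq_trans m1n (leq_addl _ _).
Qed.

Lemma gs_opt : mr gs = mi.
Proof.
apply/eqP; rewrite eq_le mi_le ?andbT; last exact: P_mono gs_P.
rewrite leNgt; apply/negP => /ltr_add_invr [k Hk].
by have := lt_le_trans Hk (gs_bound k); rewrite /E ltxx.
Qed.
End Main.

Theorem mainTheorem11 (R : realType) (gamma : R) (f : R -> R) :
  0 < gamma ->
  {within `[0, 1], continuous f} ->
  exists g : R -> R, monotone01 g /\
    (@lebesgue_measure R (bad_set gamma f g) =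
     ereal_inf [set @lebesgue_measure R (bad_set gamma f h) | h in @monotone01 R])%E.
Proof.
move=> gpos fc.
have [cM cM01 hM] := EVT_max ler01 fc.
have [cm cm01 hm] := EVT_min ler01 fc.
pose lo := f cm - gamma; pose hi := f cM + gamma.
have flohi : forall x, x \in `[(0:R), 1] -> lo <= f x - gamma /\ f x + gamma <= hi.
  move=> x x01; have := hM x x01; have := hm x x01; rewrite /lo /hi.
  move: gpos; generalize (f x) (f cm) (f cM) => a b c; split; lra.
have lohi : lo <= hi.
  have := hm cM cM01; rewrite /lo /hi; move: gpos.
  generalize (f cm) (f cM) => a b; lra.
set S := [set @lebesgue_measure R (bad_set gamma f h) | h in @monotone01 R].
have Sfin : ereal_inf S \is a fin_num.
  rewrite ge0_fin_numE; last first.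
    by apply: le_ereal_inf_tmp => _ [h _ <-]; exact: measure_ge0.
  apply: (@le_lt_trans _ _ 1%E); last by rewrite ltry.
  apply: (le_trans (ereal_inf_lbound _)); last exact: (bad_le1 gamma f (fun _ => 0)).
  by exists (fun _ => 0) => // x y _ _.
pose mi := fine (ereal_inf S).
have hmi : ereal_inf S = mi%:E by rewrite /mi fineK.
have ex : forall i, exists h, monotone01 h /\
    (lebesgue_measure (bad_set gamma f h) < (mi + (E R i - E R i.+1))%:E)%E.
  move=> i.
  have pos : 0 < E R i - E R i.+1 by rewrite subr_gt0 E_lt.
  have [_ [h mh <-] Hx] := lb_ereal_inf_adherent pos Sfin.
  by exists h; split => //; rewrite hmi -EFinD in Hx.
have [h hP] := choice ex.
exists (gs R lo hi h); split.
  have [nd _] := @gs_P R lo hi lohi h (fun i => proj1 (hP i)).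
  by move=> x y _ _ xy; exact: nd.
rewrite hmi mu_mr; congr EFin.
exact: (@gs_opt R gamma f fc lo hi flohi lohi gpos mi hmi h (fun i => proj1 (hP i)) (fun i => proj2 (hP i))).
Qed.
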